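(* Let $G$ and $H$ be finite groups, let $p$ be a prime, and suppose that $G$ is nilpotent. Suppose that for every positive integer $n$, the number of conjugacy classes of $p$-regular elements of $G$ of size $n$ equals the number of conjugacy classes of $p$-regular elements of $H$ of size $n$. Then $H$ is nilpotent.
   Context: An element is $p$-regular if its order is not divisible by $p$. The size of the conjugacy class of $g$ in $G$ is $|G:C_G(g)|$. *)

(* Defs.v *)
From mathcomp Require Import all_boot all_fingroup all_solvable pgroup nilpotent.
Set Implicit Arguments. Unset Strict Implicit. Unset Printing Implicit Defensive.
Local Open Scope group_scope.

Definition num_preg_classes_of_size (gT : finGroupType) (G : {group gT})
    (p n : nat) : nat :=
  #|[set C in classes G | [forall x in C, (p^').-elt x] && (#|C| == n)]|.

(* Main.v *)
Require Import Defs.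
From mathcomp Require Import all_boot all_fingroup all_solvable pgroup nilpotent.
From mathcomp Require Import zify.
Set Implicit Arguments. Unset Strict Implicit. Unset Printing Implicit Defensive.
Local Open Scope group_scope.

Definition ncs (gT : finGroupType) (K : {set gT}) (n : nat) : nat :=
  #|[set C in classes K | #|C| == n]|.

Lemma class_sum (gT : finGroupType) (K : {group gT}) (P : pred nat) N :
  #|K| <= N ->
  #|[set x in K | P #|x ^: K|]| = \sum_(n < N.+1 | P n) (n * ncs K n)%N.
Proof.
move=> KN.
have ->: #|[set x in K | P #|x ^: K|]| = \sum_(x in K) (P #|x ^: K| : nat).
  by rewrite -sum1_card big_mkcond /= [RHS]big_mkcond; apply: eq_bigr => x _; rewrite inE; case: (x \in K); case: (P _).
have cK := classes_partition K.
case/and3P: (cK) => /eqP covK tiK _.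
rewrite -{1}covK big_trivIset //.
have E: forall C, C \in classes K -> \sum_(x in C) (P #|x ^: K| : nat) = (P #|C| * #|C|)%N.
  move=> C /imsetP[y yK ->].
  rewrite (eq_bigr (fun _ => (P #|y ^: K| : nat))); last by move=> x /class_eqP ->.
  by rewrite sum_nat_const mulnC.
rewrite (eq_bigr _ E).

rewrite (partition_big (fun C : {set gT} => inord #|C| : 'I_N.+1) xpredT) //=.
rewrite [RHS]big_mkcond /=; apply: eq_bigr => n _.
have leC: forall C, C \in classes K -> #|C| <= N.
  move=> C /imsetP[y yK ->]; apply: leq_trans KN.
  by apply: subset_leq_card; apply: class_subG.
rewrite (eq_big (fun C => C \in [set C in classes K | #|C| == n]) (fun _ => (P n * n)%N)).
- rewrite sum_nat_const /ncs.
  by case: (P n); rewrite ?mul1n ?mul0n ?muln0 // mulnC.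
- move=> C; rewrite inE; case CK: (C \in classes K) => //=.
  by rewrite -(inj_eq val_inj) /= inordK // ltnS leC.
- move=> C /andP[CK /eqP <-].
  by rewrite /= inordK // ltnS leC.
Qed.

Lemma Sylow_cent_class (gT : finGroupType) (K S : {group gT}) q x :
  prime q -> q.-Sylow(K) S -> x \in K -> S \subset 'C[x] -> ~~ (q %| #|x ^: K|).
Proof.
move=> qpr sylS xK sSC.
have sSK := pHall_sub sylS.
have sSCK : S \subset 'C_K[x] by rewrite subsetI sSK.
rewrite -index_cent1 -p'natE //.
have := Lagrange_index (subsetIl K 'C[x]) sSCK.
case/and3P: sylS => _ _ iS E.
by rewrite -E pnatM in iS; case/andP: iS.
Qed.

Lemma class_p'_Sylow (gT : finGroupType) (K T : {group gT}) q x :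
  prime q -> q.-Sylow(K) T -> x \in K -> ~~ (q %| #|x ^: K|) ->
  exists2 g, g \in K & T :^ g \subset 'C_K[x].
Proof.
move=> qpr sylT xK nq.
have [S sylS] := Sylow_exists q 'C_K[x].
have sylSK : q.-Sylow(K) S.
  case/and3P: sylS => sSC qS iS.
  apply/and3P; split => //; first exact: subset_trans sSC (subsetIl _ _).
  rewrite -(Lagrange_index (subsetIl K 'C[x]) sSC) pnatM iS andbT.
  by rewrite index_cent1 p'natE.
have [g gK defS] := Sylow_trans sylT sylSK.
by exists g => //; rewrite -defS; exact: pHall_sub sylS.
Qed.

Lemma card_bigcup1 (gT : finGroupType) (I : finType) (J : {set I}) (F : I -> {set gT}) :
  {in J, forall i, 1 \in F i} ->
  #|\bigcup_(i in J) F i| <= 1 + \sum_(i in J) (#|F i| - 1).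
Proof.
move=> F1.
apply: leq_trans (subset_leq_card (subsetUr [set 1] _)) _.
rewrite /=.
elim/big_rec2: _ => [|i s U iJ IH]; first by rewrite setU0 cards1.
have Fi1 := F1 i iJ.
have ->: [set 1] :|: (F i :|: U) = F i :|: ([set 1] :|: U).
  by rewrite setUA (setUC [set 1]) -setUA.
have h := cardsUI (F i) ([set 1] :|: U).
have h2 : 1 <= #|F i :&: ([set 1] :|: U)|.
  by rewrite card_gt0; apply/set0Pn; exists 1; rewrite inE Fi1 !inE eqxx.
have h3 : 1 <= #|F i| by rewrite card_gt0; apply/set0Pn; exists 1.
move: h h2 h3 IH; move: #|F i :|: _| #|F i :&: _| #|F i| #|1 |: U| => a c f b; lia.
Qed.

Lemma rcosetJx (gT : finGroupType) (A : {set gT}) x y : (A :* x) :^ y = A :^ y :* x ^ y.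
Proof. by rewrite conjsMg conjg_set1. Qed.

Lemma rcosets_partition_set (gT : finGroupType) (Z : {group gT}) (A : {set gT}) :
  Z * A \subset A -> partition (rcosets Z A) A.
Proof.
move=> ZA.
have eqZA : Z * A = A by apply/eqP; rewrite eqEsubset ZA mulG_subr.
rewrite -{2}eqZA.
set HG := Z * A; have sGHG: {subset A <= HG} by apply/subsetP/mulG_subr.
have defHx x: x \in HG -> [set y in HG | rcoset Z x == rcoset Z y] = Z :* x.
  move=> HGx; apply/setP=> y; rewrite inE !rcosetE (sameP eqP rcoset_eqP).
  by rewrite rcoset_sym; apply/andb_idl/subsetP; rewrite mulGS sub1set.
have:= preim_partitionP (rcoset Z) HG; congr (partition _ _); apply/setP=> Hx.
apply/imsetP/idP=> [[x HGx ->] | ]; first by rewrite defHx // mem_rcosets.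
by case/imsetP=> x /sGHG-HGx ->; exists x; rewrite ?defHx ?rcosetE.
Qed.

Lemma card_rcosets_set (gT : finGroupType) (Z : {group gT}) (A : {set gT}) :
  Z * A \subset A -> #|A| = (#|rcosets Z A| * #|Z|)%N.
Proof.
move=> ZA; apply: card_uniform_partition (rcosets_partition_set ZA).
by move=> B /imsetP[x _ ->]; rewrite rcosetE card_rcoset.
Qed.


Lemma conj_comm (gT : finGroupType) (x y : gT) : commute x y -> x ^ y = x.
Proof. by move=> cxy; rewrite conjgE cxy mulKg. Qed.

Lemma arith1 nc x n : x <= 1 + (nc - n) -> nc <= x -> 1 < n -> n <= nc -> False.
Proof. lia. Qed.

Lemma key_lemma (gT : finGroupType) (K T : {group gT}) q :
  prime q -> q.-Sylow(K) T ->
  #|[set x in K | ~~ (q %| #|x ^: K|)]| = (#|'Z(K)|`_q * #|K|`_q^')%N ->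
  T <| K.
Proof.
move=> qpr sylT hX.
set X := [set x in K | ~~ (q %| #|x ^: K|)] in hX.
have sTK := pHall_sub sylT.
pose Z0 := ('Z(K) :&: T)%G.
have sylZ0 : q.-Sylow('Z(K)) Z0 := Sylow_setI_normal (center_normal K) sylT.
have cZ0 : #|Z0| = (#|'Z(K)|`_q)%N := card_Hall sylZ0.
have sZ0Z : Z0 \subset 'Z(K) := subsetIl _ _.
have sZ0T : Z0 \subset T := subsetIr _ _.
have cKZ0 : K \subset 'C(Z0).
  by rewrite centsC (subset_trans sZ0Z) // subIset // orbC subxx.
have cTZ0 : T \subset 'C(Z0) := subset_trans sTK cKZ0.
have sZ0ZT : Z0 \subset 'Z(T) by rewrite subsetI sZ0T centsC.
have sZTC : 'Z(T) \subset 'C_K(T) by apply: setSI.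
have nZ0K : K \subset 'N(Z0) := subset_trans cKZ0 (cent_sub _).
have XP : forall x, reflect (x \in K /\ exists2 g, g \in K & T :^ g \subset 'C[x]) (x \in X).
  move=> x; rewrite inE; apply: (iffP andP) => [[xK nq] | [xK [g gK sTg]]].
    have [g gK sTg] := class_p'_Sylow qpr sylT xK nq.
    by split => //; exists g => //; apply: subset_trans sTg (subsetIr _ _).
  split => //; apply: Sylow_cent_class qpr _ xK sTg.
  by rewrite pHallJ.
have sZ0K : Z0 \subset K := subset_trans sZ0T sTK.
have ZX : Z0 * X \subset X.
  apply/subsetP => y /mulsgP[z x zZ xX ->].
  case/XP: xX => xK [g gK sTg].
  apply/XP; split; first by rewrite groupM // (subsetP sZ0K).
  exists g => //; apply/subsetP => s sS.
  have sTgK : T :^ g \subset K by rewrite -(conjGid gK) conjSg.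
  have sK : s \in K := subsetP sTgK s sS.
  apply/cent1P; apply: commuteM.
    by move/centP: (subsetP cKZ0 s sK); apply.
  by apply/cent1P; apply: (subsetP sTg).
have XJ : forall x t, x \in X -> t \in K -> x ^ t \in X.
  by move=> x t; rewrite !inE => /andP[xK nq] tK; rewrite groupJ // classGidl.
pose XX := rcosets Z0 X.
have XXJ : forall A t, A \in XX -> t \in K -> A :^ t \in XX.
  move=> A t /imsetP[x xX ->] tK; rewrite rcosetE rcosetJx (normP (subsetP nZ0K t tK)).
  by rewrite -rcosetE imset_f // XJ.
have actT : [acts T, on XX | 'Js].
  apply/actsP => t tT A /=; apply/idP/idP => [AJ|AX]; last exact: XXJ (subsetP sTK t tT).
  by rewrite -(conjsgK t A) XXJ // groupV (subsetP sTK).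
have modX := pgroup_fix_mod (pHall_pgroup sylT) actT.
have cTZ0' : Z0 \subset 'C(T) by rewrite centsC.
have FixE : 'Fix_(XX | 'Js)(T) = rcosets Z0 'C_K(T).
  apply/setP => A; rewrite inE; apply/andP/idP.
    case=> AX /afixP fixA; case/imsetP: AX => x xX defA.
    rewrite defA rcosetE in fixA *.
    have xX' := xX; case/XP: xX' => xK [g gK sTg].
    pose D := ('N_K(Z0 :* x))%G.
    have sTD : T \subset D.
      rewrite subsetI sTK; apply/subsetP => t tT; apply/normP.
      exact: (fixA t tT).
    have sTgK : T :^ g \subset K by rewrite -(conjGid gK) conjSg.
    have sSD : T :^ g \subset D.
      rewrite subsetI sTgK; apply/subsetP => s sS; apply/normP.
      rewrite rcosetJx (normP (subsetP nZ0K s (subsetP sTgK s sS))).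
      by rewrite conj_comm //; apply/esym/cent1P; apply: (subsetP sTg).
    have sylTD : q.-Sylow(D) T := pHall_subl sTD (subsetIl _ _) sylT.
    have sylSD : q.-Sylow(D) (T :^ g)%G.
      by apply: pHall_subl sSD (subsetIl _ _) _; rewrite pHallJ.
    have [h hD defT] := Sylow_trans sylSD sylTD.
    have xCS : x \in 'C(T :^ g) by rewrite -sub_cent1.
    have xhC : x ^ h \in 'C(T) by rewrite defT centJ memJ_conjg.
    have hN : h \in 'N(Z0 :* x) by case/setIP: hD.
    have xhZ : x ^ h \in Z0 :* x.
      by rewrite -(normP hN) memJ_conjg rcoset_refl.
    rewrite mem_rcoset in xhZ.
    have xC : x \in 'C(T).
      have -> : x = (x ^ h * x^-1)^-1 * x ^ h by rewrite invMg invgK mulgKV.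
      by rewrite groupM // groupV (subsetP cTZ0').
    by rewrite -rcosetE imset_f // inE xK.
  case/imsetP=> y yC ->; rewrite rcosetE.
  have [yK yCT] := setIP yC.
  split.
    rewrite -rcosetE imset_f //; apply/XP; split => //; exists 1 => //.
    by rewrite conjsg1 sub_cent1.
  apply/afixP => t tT /=.
  rewrite rcosetJx (normP (subsetP nZ0K t (subsetP sTK t tT))) conj_comm //.
  by move/centP: yCT; apply.
have cXX : #|XX| = (#|K|`_q^')%N.
  have := card_rcosets_set ZX; rewrite hX -cZ0 mulnC => /eqP.
  by rewrite eqn_pmul2r ?cardG_gt0 // => /eqP ->.
have cFix : #|'Fix_(XX | 'Js)(T)| = #|'C_K(T) : Z0| by rewrite FixE.
have sZ0C : Z0 \subset 'C_K(T) := subset_trans sZ0ZT sZTC.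
have LI := Lagrange_index (sZTC : 'Z(T)%G \subset 'C_K(T)%G) sZ0ZT.
have qK' : ~~ (q %| #|K|`_q^').
  by rewrite -p'natE // part_pnat.
have sZTZ0 : 'Z(T) \subset Z0.
  apply/negPn/negP => nsub.
  have ni1 : #|'Z(T) : Z0| != 1%N by rewrite indexg_eq1.
  have qi : q.-nat #|'Z(T) : Z0|.
    apply: pnat_dvd (dvdn_indexg _ _) _.
    exact: pgroupS (center_sub T) (pHall_pgroup sylT).
  have qdi : q %| #|'Z(T) : Z0|.
    apply/negPn/negP => nqd; case/eqP: ni1; apply: pnat_1 qi _.
    by rewrite p'natE.
  have : q %| #|XX|.
    rewrite /dvdn modX cFix -LI /= -/(dvdn _ _).
    exact: dvdn_mull.
  by rewrite cXX (negPf qK').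
have eZ : 'Z(T) = Z0 by apply/eqP; rewrite eqEsubset sZTZ0.
have XE : X = \bigcup_(S in T :^: K) 'C_K(S).
  apply/setP => x; apply/idP/bigcupP => [xX | [S /imsetP[g gK ->] xC]].
    case/XP: xX => xK [g gK sTg]; exists (T :^ g); first exact: imset_f.
    by rewrite inE xK -sub_cent1.
  have [xK xCS] := setIP xC.
  by apply/XP; split => //; exists g => //; rewrite sub_cent1.
have CJ : forall g, g \in K -> #|'C_K(T :^ g)| = #|'C_K(T)|.
  by move=> g gK; rewrite -{1}(conjGid gK) centJ -conjIg cardJg.
have bound := @card_bigcup1 gT _ (T :^: K) (fun S => 'C_K(S)) (fun S _ => group1 _).
rewrite -XE in bound.
have sumE : \sum_(S in T :^: K) (#|'C_K(S)| - 1) = (#|T :^: K| * (#|'C_K(T)| - 1))%N.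
  rewrite -sum_nat_const; apply: eq_bigr => S /imsetP[g gK ->].
  by rewrite CJ.
rewrite sumE card_conjugates in bound.
set n := #|K : 'N_K(T)| in bound *.
set c := #|'C_K(T)| in bound sumE *.
have sCN : 'C_K(T) \subset 'N_K(T) by apply: setIS; apply: cent_sub.
have sTN : T \subset 'N_K(T) by rewrite subsetI sTK normG.
have CTE : 'C_K(T) :&: T = 'Z(T).
  by rewrite /= setIC setIA (setIidPl sTK).
have mC := mul_cardG ('C_K(T))%G T.
rewrite /= CTE eZ in mC.
have CTN : #|'C_K(T) * T| <= #|'N_K(T)|.
  by apply: subset_leq_card; rewrite mulG_subG sCN sTN.
have LK := Lagrange (subsetIl K 'N(T)).
have TK : (#|T| * #|K|`_q^')%N = #|K|.
  by rewrite (card_Hall sylT) partnC.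
have ineq : (n * c <= #|Z0| * #|K|`_q^')%N.
  rewrite -(leq_pmul2r (cardG_gt0 T)) -mulnA mC.
  move: CTN LK TK; rewrite /=.
  move: (#|'C_K(T) * T|) (#|'N_K(T)|) (#|Z0|) (#|K|`_q^')%N (#|T|) (#|K|) => a N z k t kk.
  move=> h1 h2 h3.
  apply: (@leq_trans (n * (N * z))); first by rewrite leq_mul2l leq_mul2r h1 !orbT.
  rewrite -h3 in h2.
  by rewrite mulnA (mulnC n) h2 mulnC (mulnC t) mulnA.
have Xc : #|X| = (#|Z0| * #|K|`_q^')%N by rewrite hX cZ0.
have c1 : 0 < c by rewrite /c cardG_gt0.
have n0 : 0 < n by rewrite /n indexg_gt0.
have n1 : n <= 1.
  rewrite leqNgt; apply/negP => n2.
  rewrite mulnBr muln1 in bound; rewrite -Xc in ineq.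
  have : n <= n * c by rewrite leq_pmulr.
  move: bound ineq n2; move: (n * c)%N (#|X|) => nc x.
  exact: arith1.
have : n == 1%N by rewrite eqn_leq n1 n0.
rewrite /n indexg_eq1 => sKN.
by rewrite /normal sTK (subset_trans sKN (subsetIr _ _)).
Qed.


Lemma Zclass (gT : finGroupType) (K : {group gT}) :
  [set x in K | #|x ^: K| == 1%N] = 'Z(K).
Proof.
apply/setP => x; rewrite !inE -index_cent1 indexg_eq1 subsetI subxx /= sub_cent1.
by [].
Qed.

Lemma sum_eq (gT hT : finGroupType) (K : {group gT}) (Q : {group hT}) (P : pred nat) :
  (forall n, 0 < n -> ncs K n = ncs Q n) ->
  #|[set x in K | P #|x ^: K|]| = #|[set x in Q | P #|x ^: Q|]|.
Proof.
move=> h.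
rewrite (@class_sum _ K P (#|K| + #|Q|)) ?leq_addr //.
rewrite (@class_sum _ Q P (#|K| + #|Q|)) ?leq_addl //.
apply: eq_bigr => [[[|n] ltn]] _ //=.
by rewrite h.
Qed.

Lemma nil_X (hT : finGroupType) (Q : {group hT}) q :
  prime q -> nilpotent Q ->
  #|[set x in Q | ~~ (q %| #|x ^: Q|)]| = (#|'Z(Q)|`_q * #|Q|`_q^')%N.
Proof.
move=> qpr nilQ.
have dQ := nilpotent_pcoreC q nilQ.
set S := 'O_q(Q) in dQ; set R := 'O_q^'(Q) in dQ.
have sylS : q.-Sylow(Q) S := nilpotent_pcore_Hall q nilQ.
have hallR : q^'.-Hall(Q) R := nilpotent_pcore_Hall q^' nilQ.
have nSQ : S <| Q := pcore_normal q Q.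
have [_ eSR cRS tiSR] := dprodP dQ.
have XE : [set x in Q | ~~ (q %| #|x ^: Q|)] = 'C_Q(S).
  apply/setP => x; rewrite !inE; apply/andP/andP => [[xQ nq] | [xQ xC]].
    have [g gQ sSg] := class_p'_Sylow qpr sylS xQ nq.
    split=> //; rewrite -sub_cent1.
    apply: subset_trans _ (subsetIr Q _).
    by rewrite -(normP (subsetP (normal_norm nSQ) g gQ)).
  split => //; apply: Sylow_cent_class qpr sylS xQ _.
  by rewrite sub_cent1.
rewrite XE.
have CE : 'C_Q(S) = 'Z(S) * R.
  rewrite -{1}eSR setIC -group_modr //.
  by rewrite setIC.
have tiZR : 'Z(S) :&: R = 1.
  by apply/trivgP; rewrite -tiSR setSI // center_sub.
rewrite CE TI_cardMg //.
have dZ := center_dprod dQ.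
rewrite -(dprod_card dZ) partnM ?cardG_gt0 //.
rewrite part_pnat_id; last exact: pgroupS (center_sub _) (pcore_pgroup _ _).
rewrite part_p'nat ?muln1; last exact: pgroupS (center_sub _) (pcore_pgroup _ _).
by rewrite (card_Hall hallR).
Qed.

Lemma CHM (gT hT : finGroupType) (K : {group gT}) (Q : {group hT}) :
  nilpotent Q -> (forall n, 0 < n -> ncs K n = ncs Q n) -> nilpotent K.
Proof.
move=> nilQ h.
have cK : #|K| = #|Q|.
  have := sum_eq predT h.
  have E1 : [set x in K | predT #|x ^: K|] = K by apply/setP => x; rewrite inE andbT.
  have E2 : [set x in Q | predT #|x ^: Q|] = Q by apply/setP => x; rewrite inE andbT.
  by rewrite E1 E2.
have cZ : #|'Z(K)| = #|'Z(Q)|.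
  by have := sum_eq (fun n => n == 1%N) h; rewrite !Zclass.
have nT : forall T : {group gT}, Sylow K T -> T <| K.
  move=> T /SylowP[q qpr sylT].
  apply: (key_lemma qpr sylT).
  rewrite (sum_eq (fun n => ~~ (q %| n)) h) (nil_X qpr nilQ).
  by congr (_ * _)%N; congr (partn _ _); [rewrite cZ | rewrite cK].
suff sKF : K \subset 'F(K) by apply: nilpotentS sKF (Fitting_nil K).
rewrite -{1}(Sylow_gen K) gen_subG; apply/bigcupsP => T sylT.
apply: Fitting_max; first exact: nT.
by case/SylowP: sylT => p _ /pHall_pgroup /pgroup_nil.
Qed.


Lemma class_dprod (gT : finGroupType) (H P L : {group gT}) x :
  P \x L = H -> x \in L -> x ^: H = x ^: L.
Proof.
move=> dH xL; have [_ ePL cLP _] := dprodP dH.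
apply/setP => y; apply/imsetP/imsetP => [[g gH ->] | [g gL ->]].
  rewrite -ePL in gH; case/mulsgP: gH => a l aP lL ->.
  have xa : x ^ a = x.
    by apply: conj_comm; move/centP: (subsetP cLP x xL); apply.
  by exists l => //; rewrite conjgM xa.
by exists g => //; rewrite -ePL (subsetP (mulG_subr _ _)).
Qed.

Lemma Red (gT : finGroupType) (H P L : {group gT}) (p : nat) :
  P \x L = H -> p.-group P -> p^'.-group L ->
  forall n, num_preg_classes_of_size H p n = ncs L n.
Proof.
move=> dH pP p'L n; rewrite /num_preg_classes_of_size /ncs; apply: eq_card => C.
have [_ nLH] := dprod_normal2 dH.
have [_ ePL _ tiPL] := dprodP dH.
have hallL : p^'.-Hall(H) L.
  apply/and3P; split => //; first exact: normal_sub nLH.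
  rewrite pnatNK -divgS ?(normal_sub nLH) //.
  by rewrite -(dprod_card dH) mulnK ?cardG_gt0.
rewrite !inE; apply/andP/andP => [[CH /andP[pC nC]] | [CL nC]].
  case/imsetP: CH => y yH defC.
  have yL : y \in L.
    rewrite (mem_normal_Hall hallL nLH yH).
    by apply: (forall_inP pC); rewrite defC class_refl.
  by split => //; rewrite defC (class_dprod dH yL) mem_classes.
case/imsetP: CL => y yL defC.
have yH : y \in H := subsetP (normal_sub nLH) y yL.
split; first by rewrite defC -(class_dprod dH yL) mem_classes.
rewrite nC andbT; apply/forall_inP => z; rewrite defC => /imsetP[g _ ->].
by rewrite p_eltJ (mem_p_elt p'L yL).
Qed.

Lemma arith2 x i : x <= 1 + (x - i) -> 1 < i -> i <= x -> False.
Proof. lia. Qed.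

Lemma cover_conj (gT : finGroupType) (H M : {group gT}) :
  M \subset H -> (forall h, h \in H -> exists2 g, g \in H & h \in M :^ g) ->
  H \subset M.
Proof.
move=> sMH cov.
have U : H \subset \bigcup_(A in M :^: H) A.
  apply/subsetP => h hH; have [g gH hM] := cov h hH.
  by apply/bigcupP; exists (M :^ g) => //; apply: imset_f.
have one : {in M :^: H, forall A : {set gT}, 1 \in id A}.
  by move=> A /imsetP[g gH ->]; rewrite /= -(conj1g g) memJ_conjg group1.
have bound := @card_bigcup1 gT _ (M :^: H) id one.
have sumE : \sum_(A in M :^: H) (#|id A| - 1) = (#|M :^: H| * (#|M| - 1))%N.
  rewrite -sum_nat_const; apply: eq_bigr => A /imsetP[g gH ->].
  by rewrite /= cardJg.
rewrite sumE card_conjugates in bound.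
have hU := leq_trans (subset_leq_card U) bound.
have ki : #|H : 'N_H(M)| <= #|H : M|.
  apply: dvdn_leq; first exact: indexg_gt0.
  by apply: indexgS; rewrite subsetI sMH normG.
have LM := Lagrange sMH.
have i0 : 0 < #|H : M| by exact: indexg_gt0.
suff i1 : #|H : M| <= 1.
  by rewrite -indexg_eq1 eqn_leq i1 i0.
rewrite leqNgt; apply/negP => i2.
have h2 : (#|H : 'N_H(M)| * (#|M| - 1) <= #|H : M| * (#|M| - 1))%N by rewrite leq_mul2r ki orbT.
have h3 : (#|H : M| * (#|M| - 1))%N = (#|H| - #|H : M|)%N by rewrite mulnBr muln1 mulnC LM.
have h4 : #|H : M| <= #|H| by rewrite -LM leq_pmull ?cardG_gt0.
apply: (arith2 _ i2 h4).
by apply: leq_trans hU _; rewrite -h3 leq_add2l.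
Qed.


Lemma Hstruct (gT : finGroupType) (H : {group gT}) (p : nat) :
  prime p -> (forall x, x \in H -> p^'.-elt x -> ~~ (p %| #|x ^: H|)) ->
  exists P : {group gT}, exists L : {group gT},
    [/\ P \x L = H, p.-group P & p^'.-group L].
Proof.
move=> ppr hyp.
have [P sylP] := Sylow_exists p H.
have sPH := pHall_sub sylP.
have nPH : H \subset 'N(P).
  have sNH : 'N_H(P) \subset H := subsetIl _ _.
  apply: subset_trans (cover_conj sNH _) (subsetIr _ _).
  move=> h hH.
  set a := h.`_p; set y := h.`_p^'.
  have aH : a \in H by apply: (subsetP _ _ (cycle_constt p h)); rewrite cycle_subG.
  have yH : y \in H by apply: (subsetP _ _ (cycle_constt p^' h)); rewrite cycle_subG.
  have [g gH sPg] := class_p'_Sylow ppr sylP yH (hyp y yH (p_elt_constt _ _)).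
  set Cy := 'C_H[y].
  have cay : commute a y.
    have := cycle_abelian h; move/centsP => cab.
    by apply: (cab a (cycle_constt p h) y (cycle_constt p^' h)).
  have aC : a \in Cy by rewrite inE aH; apply/cent1P.
  have pa : p.-group <[a]> by apply: p_elt_constt.
  have saC : <[a]> \subset Cy by rewrite cycle_subG.
  have [S sylS saS] := Sylow_superset saC pa.
  have sCH : Cy \subset H := subsetIl _ _.
  have sylPg : p.-Sylow(Cy) (P :^ g)%G.
    by apply: pHall_subl sPg sCH _; rewrite pHallJ.
  have [c cC defS] := Sylow_trans sylPg sylS.
  have cH : c \in H := subsetP sCH c cC.
  have sSC : S \subset 'C[y] by apply: subset_trans (pHall_sub sylS) (subsetIr _ _).
  exists (g * c); first by rewrite groupM.
  have hS : h \in 'N(S).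
    have -> : h = a * y by rewrite /a /y consttC.
    rewrite groupM //.
      by apply: (subsetP (normG S)); rewrite -cycle_subG.
    apply: (subsetP (cent_sub S)); by rewrite -sub_cent1.
  have -> : 'N_H(P) :^ (g * c) = 'N_H(S).
    have defS' : (S : {set gT}) = (P :^ g) :^ c by rewrite defS.
    by rewrite conjIg -normJ !conjsgM -defS' !conjGid // groupM.
  by rewrite inE hH.
have nsPH : P <| H by rewrite /normal sPH nPH.
have [L /complP[tiPL ePL]] := splitsP (SchurZassenhaus_split (pHall_Hall sylP) nsPH).
have cL : #|L| = #|H : P|.
  have := Lagrange sPH; rewrite -{2}ePL (TI_cardMg tiPL) => /eqP.
  by rewrite eqn_pmul2l ?cardG_gt0 // => /eqP.
have p'L : p^'.-group L.
  by rewrite /pgroup cL; case/and3P: sylP.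
have sLH : L \subset H by rewrite -ePL mulG_subr.
have cLP : L \subset 'C(P).
  apply/subsetP => x xL; have xH := subsetP sLH x xL.
  have [g gH sPg] := class_p'_Sylow ppr sylP xH (hyp x xH (mem_p_elt p'L xL)).
  rewrite (normP (subsetP nPH g gH)) in sPg.
  by rewrite -sub_cent1 (subset_trans sPg (subsetIr _ _)).
exists P, L; split => //; last exact: pHall_pgroup sylP.
by rewrite dprodE.
Qed.


Local Close Scope group_scope.
Unset Implicit Arguments.
Unset Strict Implicit.

Theorem corollaryB (gT hT : finGroupType) (G : {group gT}) (H : {group hT})
    (p : nat) :
  prime p -> nilpotent G ->
  (forall n : nat, 0 < n ->
     num_preg_classes_of_size G p n = num_preg_classes_of_size H p n) ->
  nilpotent H.
Proof.
Local Open Scope group_scope.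
move=> ppr nilG hyp.
have dG := nilpotent_pcoreC p nilG.
have redG := Red dG (pcore_pgroup _ _) (pcore_pgroup _ _).
set QG := ('O_p^'(G))%g in dG redG.
have p'QG : p^'.-group QG := pcore_pgroup _ _.
have h0 : forall n, p %| n -> ncs QG n = 0%N.
  move=> n pn; apply/eqP; rewrite cards_eq0; apply/eqP/setP => C.
  rewrite !inE; apply/negbTE/negP => /andP[/imsetP[y yQ ->] /eqP sz].
  have := pnat_dvd (dvdn_indexg QG 'C_QG[y]) p'QG.
  by rewrite index_cent1 sz p'natE // pn.
have hH : forall x, x \in H -> p^'.-elt x -> ~~ (p %| #|x ^: H|).
  move=> x xH px; apply/negP => pdiv.
  have n0 : 0 < #|x ^: H| by rewrite card_gt0; apply/set0Pn; exists x; exact: class_refl.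
  have := hyp _ n0; rewrite redG h0 // => /esym/eqP.
  rewrite cards_eq0 => /eqP/setP/(_ (x ^: H)).
  rewrite !inE mem_classes // eqxx andbT /= => /negbT/negP; apply.
  apply/forall_inP => z /imsetP[g _ ->]; by rewrite p_eltJ.
have [P [L [dH pP p'L]]] := Hstruct ppr hH.
have redH := Red dH pP p'L.
have nilL : nilpotent L.
  apply: (CHM (Q := QG)); first exact: nilpotentS (pcore_sub _ _) nilG.
  by move=> n n0; rewrite -redH -redG hyp.
by rewrite (dprod_nil dH) nilL (pgroup_nil pP).
Qed.
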